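(* For any real numbers $a,b$ with $a\neq\pm b$ and any natural number $n\ge1$, \[ \Phi(a,b,2n)=\Phi(a,b,n)\,\Psi(a,b,n). \]
   Context: $\delta(m)=1$ for $m$ odd, $0$ for $m$ even. $\Psi(a,b,n)$, $\Phi(a,b,n)$ are defined by $\Psi(a,b,0)=2$, $\Psi(a,b,1)=1$, $\Psi(a,b,n+1)=(2a-b)^{\delta(n)}\Psi(a,b,n)-a\Psi(a,b,n-1)$ and $\Phi(a,b,0)=0$, $\Phi(a,b,1)=1$, $\Phi(a,b,n+1)=(2a-b)^{\delta(n+1)}\Phi(a,b,n)-a\Phi(a,b,n-1)$ for $n\ge1$. *)

(* Defs.v *)
From Stdlib Require Import Reals.
Open Scope R_scope.

Definition delta (m : nat) : nat := if Nat.odd m then 1%nat else 0%nat.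

(* Psi_pair a b n = (Psi(a,b,n), Psi(a,b,n+1)) *)
Fixpoint Psi_pair (a b : R) (n : nat) : R * R :=
  match n with
  | O => (2, 1)
  | S m => let (p0, p1) := Psi_pair a b m in
           (p1, (2*a - b) ^ (delta (S m)) * p1 - a * p0)
  end.

Definition Psi (a b : R) (n : nat) : R := fst (Psi_pair a b n).

(* Phi_pair a b n = (Phi(a,b,n), Phi(a,b,n+1)) *)
Fixpoint Phi_pair (a b : R) (n : nat) : R * R :=
  match n with
  | O => (0, 1)
  | S m => let (p0, p1) := Phi_pair a b m in
           (p1, (2*a - b) ^ (delta (S (S m))) * p1 - a * p0)
  end.

Definition Phi (a b : R) (n : nat) : R := fst (Phi_pair a b n).

Lemma Psi_rec a b n : (1 <= n)%nat ->
  Psi a b (S n) = (2*a - b) ^ (delta n) * Psi a b n - a * Psi a b (pred n).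
Proof.
  intros H. destruct n as [|m]; [inversion H|]. simpl pred.
  unfold Psi. simpl. destruct (Psi_pair a b m) as [p0 p1]. simpl. reflexivity.
Qed.

Lemma Phi_rec a b n : (1 <= n)%nat ->
  Phi a b (S n) = (2*a - b) ^ (delta (S n)) * Phi a b n - a * Phi a b (pred n).
Proof.
  intros H. destruct n as [|m]; [inversion H|]. simpl pred.
  unfold Phi. simpl. destruct (Phi_pair a b m) as [p0 p1]. simpl. reflexivity.
Qed.

(* Main.v *)
Require Import Defs.
From Stdlib Require Import Reals.
Open Scope R_scope.
From Stdlib Require Import Lra Lia Arith.

Fixpoint LU (P Q : R) (k : nat) : R :=
  match k with
  | O => 0
  | S k' => match k' with
            | O => 1
            | S k'' => P * LU P Q k' - Q * LU P Q k''
            end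
  end.

Lemma LU_SS P Q k : LU P Q (S (S k)) = P * LU P Q (S k) - Q * LU P Q k.
Proof. reflexivity. Qed.

Lemma LU_add P Q m : forall n,
  LU P Q (S (m + n)) = LU P Q (S m) * LU P Q (S n) - Q * LU P Q m * LU P Q n.
Proof.
  induction m as [|m IH]; intros n.
  - simpl. ring.
  - replace (S (S m + n)) with (S (m + S n)) by lia.
    rewrite IH. rewrite (LU_SS P Q n). rewrite (LU_SS P Q m). ring.
Qed.

Lemma odd_kk k : Nat.odd (k + k) = false /\ Nat.odd (S (k + k)) = true.
Proof.
  induction k as [|k IH]; [split; reflexivity|].
  rewrite Nat.add_succ_r. simpl Nat.add.
  unfold Nat.odd in *. simpl. tauto.
Qed.

Lemma delta_e k : delta (k + k) = 0%nat.
Proof. unfold delta. rewrite (proj1 (odd_kk k)). reflexivity. Qed.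
Lemma delta_o k : delta (S (k + k)) = 1%nat.
Proof. unfold delta. rewrite (proj2 (odd_kk k)). reflexivity. Qed.

Lemma Phi_U a b k :
  Phi a b (k + k) = LU (-b) (a*a) k /\
  Phi a b (S (k + k)) = LU (-b) (a*a) (S k) + a * LU (-b) (a*a) k.
Proof.
  induction k as [|k [IH1 IH2]].
  - unfold Phi; simpl; split; ring.
  - assert (E1 : Phi a b (S k + S k) = LU (-b) (a*a) (S k)).
    { replace (S k + S k)%nat with (S (S (k + k))) by lia.
      rewrite Phi_rec by lia.
      replace (S (S (k + k))) with (S k + S k)%nat by lia.
      rewrite delta_e. simpl pred. rewrite IH1, IH2. simpl pow. ring. }
    split; [exact E1|].
    replace (S (S k + S k)) with (S (S (S (k + k)))) by lia.
    rewrite Phi_rec by lia.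
    replace (S (S (S (k + k)))) with (S ((S k) + (S k))) by lia.
    rewrite delta_o. simpl pred.
    replace (S (S (k + k))) with (S k + S k)%nat by lia.
    rewrite E1, IH2. rewrite LU_SS. simpl pow. ring.
Qed.

Lemma Psi_U a b k :
  Psi a b (k + k) = 2 * LU (-b) (a*a) (S k) + b * LU (-b) (a*a) k /\
  Psi a b (S (k + k)) = LU (-b) (a*a) (S k) - a * LU (-b) (a*a) k.
Proof.
  induction k as [|k [IH1 IH2]].
  - unfold Psi; simpl; split; ring.
  - assert (E1 : Psi a b (S k + S k) = 2 * LU (-b) (a*a) (S (S k)) + b * LU (-b) (a*a) (S k)).
    { replace (S k + S k)%nat with (S (S (k + k))) by lia.
      rewrite Psi_rec by lia.
      rewrite delta_o. simpl pred. rewrite IH2, IH1. rewrite LU_SS. simpl pow. ring. }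
    split; [exact E1|].
    replace (S (S k + S k)) with (S (S (S (k + k)))) by lia.
    rewrite Psi_rec by lia.
    replace (S (S (k + k))) with (S k + S k)%nat by lia.
    rewrite delta_e. simpl pred.
    replace (S (k + k)) with (S (k + k)) by reflexivity.
    replace (k + S k)%nat with (S (k + k)) by lia. rewrite E1, IH2. rewrite !LU_SS. simpl pow. ring.
Qed.

Theorem theorem13p3 (a b : R) (n : nat) :
  a <> b -> a <> - b -> (1 <= n)%nat ->
  Phi a b (2 * n) = Phi a b n * Psi a b n.
Proof.
  intros _ _ Hn.
  destruct (Nat.Even_or_Odd n) as [[k Hk]|[k Hk]]; subst n.
  - destruct k as [|k]; [lia|].
    replace (2 * (2 * S k))%nat with ((S k + S k) + (S k + S k))%nat by lia.
    replace (2 * S k)%nat with (S k + S k)%nat by lia.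
    rewrite (proj1 (Phi_U a b (S k + S k))).
    rewrite (proj1 (Phi_U a b (S k))), (proj1 (Psi_U a b (S k))).
    replace (S k + S k)%nat with (S (k + S k)) at 1 by lia.
    rewrite LU_add. rewrite (LU_SS _ _ k). ring.
  - replace (2 * (2 * k + 1))%nat with (S (k + k) + S (k + k))%nat by lia.
    replace (2 * k + 1)%nat with (S (k + k)) by lia.
    rewrite (proj1 (Phi_U a b (S (k + k)))).
    rewrite (proj2 (Phi_U a b k)), (proj2 (Psi_U a b k)).
    rewrite LU_add. ring.
Qed.
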